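(* Let $F$ be an infinite family of index sets linearly ordered by $\subseteq$ such that $I_1\subsetneq I_2$ in $F$ implies $I_2\setminus I_1$ is infinite, and let $\mathcal{T}_F=\{T_I\mid I\in F\}$. If $F$ is discrete, then $\mathcal{T}_F$ is the least generating set for $\mathrm{Cl}_E(\mathcal{T}_F)$.
   Context: A predicate symbol $R$ is non-empty for a theory $T$ if $T\vdash\exists\bar x R(\bar x)$, empty otherwise. A complete theory $T$ in a predicate language is language uniform (LU) if for each arity $m$, every permutation of the set of $m$-ary symbols non-empty for $T$ preserves $T$. Let $T_0$ be a complete LU-theory in a relational language $\Sigma_0$, let $n\ge1$, and let $\{R_k\mid k\in I_0\}$, $I_0$ infinite, be the set of $n$-ary symbols of $\Sigma_0$ that are non-empty for $T_0$. Let $\Sigma'=\{R_k\mid k\in I_0\}\cup\{$symbols of $\Sigma_0$ of arity $\neq n\}$. An index set is an infinite $I\subseteq I_0$ with $|I|=|I_0|$ and $|I_0\setminus I|$ equal to the number of $n$-ary symbols of $\Sigma_0$ that are empty for $T_0$. For an index set $I$, $T_I$ is the complete $\Sigma'$-theory axiomatized by the restriction of $T_0$ to the language $\{R_k\mid k\in I\}\cup\{$symbols of arity $\ne n\}$ together with $\{\forall\bar x\neg R_l(\bar x)\mid l\in I_0\setminus I\}$. $E$-closure (over $\Sigma'$): let $E$ be a new binary symbol. The $E$-combination of a family $(\mathcal{A}_i)_i$ of $\Sigma'$-structures with disjoint universes is the $(\Sigma'\cup\{E\})$-structure on $\bigcup_iA_i$ with $E$ the equivalence relation whose classes are the $A_i$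 and each $R\in\Sigma'$ interpreted as $\bigcup_iR^{\mathcal{A}_i}$. For a set $\mathcal{T}$ of complete $\Sigma'$-theories, $\mathrm{Cl}_E(\mathcal{T})$ is the set of complete theories of the $E$-classes (as induced $\Sigma'$-structures) of structures elementarily equivalent to some $E$-combination of structures whose theories lie in $\mathcal{T}$. For an $E$-closed set $\mathcal{C}$ ($\mathrm{Cl}_E(\mathcal{C})=\mathcal{C}$), a subset $\mathcal{G}\subseteq\mathcal{C}$ is generating if $\mathrm{Cl}_E(\mathcal{G})=\mathcal{C}$; it is the least generating set if it is generating, has no proper generating subset, and is contained in every generating set. For infinite $F'\subseteq F$: $\bigcup F'$ is an (upper) accumulation point of $F'$ if $\bigcup F'\notin F'$, and $\bigcap F'$ is a (lower) accumulation point of $F'$ if $\bigcap F'\notin F'$. $F$ is discrete if no element of $F$ is an accumulation point of some infinite $F'\subseteq F$. *)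

(* Defs.v *)
From Stdlib Require Import List Arith.
Import ListNotations.
Set Implicit Arguments.

Inductive form (Sym : Type) : Type :=
| FRel : Sym -> list nat -> form Sym
| FEq  : nat -> nat -> form Sym
| FBot : form Sym
| FImp : form Sym -> form Sym -> form Sym
| FAll : nat -> form Sym -> form Sym.
Arguments FBot {Sym}.
Arguments FRel {Sym}.
Arguments FEq {Sym}.
Arguments FImp {Sym}.
Arguments FAll {Sym}.

Definition FNot {Sym} (p : form Sym) : form Sym := FImp p FBot.
Definition FEx {Sym} (x : nat) (p : form Sym) : form Sym :=
  FNot (FAll x (FNot p)).

Fixpoint fv {Sym} (p : form Sym) : list nat :=
  match p with
  | FRel _ xs => xs
  | FEq x y => [x; y]
  | FBot => []
  | FImp p q => fv p ++ fv q
  | FAll x p => filter (fun y => negb (Nat.eqb y x)) (fv p)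
  end.

Fixpoint wf {Sym} (ar : Sym -> nat) (L : Sym -> Prop) (p : form Sym) : Prop :=
  match p with
  | FRel R xs => L R /\ length xs = ar R
  | FEq _ _ => True
  | FBot => True
  | FImp p q => wf ar L p /\ wf ar L q
  | FAll _ p => wf ar L p
  end.

Definition sentence {Sym} (ar : Sym -> nat) (L : Sym -> Prop) (p : form Sym) :=
  wf ar L p /\ fv p = [].

Fixpoint rename {Sym} (s : Sym -> Sym) (p : form Sym) : form Sym :=
  match p with
  | FRel R xs => FRel (s R) xs
  | FEq x y => FEq x y
  | FBot => FBot
  | FImp p q => FImp (rename s p) (rename s q)
  | FAll x p => FAll x (rename s p)
  end.

Definition exR {Sym} (ar : Sym -> nat) (R : Sym) : form Sym :=
  fold_right (fun x p => FEx x p) (FRel R (seq 0 (ar R))) (seq 0 (ar R)).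
Definition allnotR {Sym} (ar : Sym -> nat) (R : Sym) : form Sym :=
  fold_right (fun x p => FAll x p) (FNot (FRel R (seq 0 (ar R)))) (seq 0 (ar R)).

Record structure (Sym : Type) := Structure {
  carrier : Type;
  point : carrier;                         (* universes are nonempty *)
  interp : Sym -> list carrier -> Prop }.
Arguments Structure {Sym}.

Definition upd {M : Type} (e : nat -> M) (x : nat) (a : M) : nat -> M :=
  fun y => if Nat.eqb y x then a else e y.

Fixpoint sat {Sym} (M : structure Sym) (e : nat -> carrier M) (p : form Sym)
  : Prop :=
  match p with
  | FRel R xs => interp M R (map e xs)
  | FEq x y => e x = e y
  | FBot => False
  | FImp p q => sat M e p -> sat M e q
  | FAll x p => forall a : carrier M, sat M (upd e x a) p
  end.

Definition holds {Sym} (M : structure Sym) (p : form Sym) : Prop :=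
  forall e, sat M e p.

Definition Th {Sym} (ar : Sym -> nat) (L : Sym -> Prop) (M : structure Sym)
  : form Sym -> Prop :=
  fun p => sentence ar L p /\ holds M p.

(** a complete theory in the language L (semantic definition: the set of
    all L-sentences true in some L-structure) *)
Definition complete_theory {Sym} (ar : Sym -> nat) (L : Sym -> Prop)
  (T : form Sym -> Prop) : Prop :=
  exists M : structure Sym, T = Th ar L M.

Definition models {Sym} (M : structure Sym) (T : form Sym -> Prop) : Prop :=
  forall p, T p -> holds M p.

(** T ⊢ p  (semantic consequence; by completeness = provability) *)
Definition entails {Sym} (T : form Sym -> Prop) (p : form Sym) : Prop :=
  forall M : structure Sym, models M T -> holds M p.

Definition elem_equiv {Sym} (ar : Sym -> nat) (L : Sym -> Prop)
  (M N : structure Sym) : Prop :=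
  forall p, sentence ar L p -> (holds M p <-> holds N p).

Definition nonempty_sym {S} (ar : S -> nat) (T : form S -> Prop) (R : S) :=
  entails T (exR ar R).

Definition bijective {A B} (f : A -> B) :=
  exists g : B -> A, (forall x, g (f x) = x) /\ (forall y, f (g y) = y).

Definition LU {S} (ar : S -> nat) (T : form S -> Prop) : Prop :=
  forall (m : nat) (sg : S -> S),
    bijective sg ->
    (forall s, ar s = m /\ nonempty_sym ar T s ->
               ar (sg s) = m /\ nonempty_sym ar T (sg s)) ->
    (forall s, ~ (ar s = m /\ nonempty_sym ar T s) -> sg s = s) ->
    forall p, T p <-> T (rename sg p).

Definition infinite {T} (A : T -> Prop) : Prop :=
  ~ exists l : list T, forall x, A x -> In x l.

Definition subset {T} (A B : T -> Prop) := forall x, A x -> B x.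

Definition equipotent {T} (A B : T -> Prop) : Prop :=
  exists f : {x | A x} -> {x | B x}, bijective f.

Section Setting.
Variables (S : Type) (ar : S -> nat) (T0 : form S -> Prop) (n : nat).

Definition I0 : S -> Prop := fun k => ar k = n /\ nonempty_sym ar T0 k.
Definition emptyN : S -> Prop := fun k => ar k = n /\ ~ nonempty_sym ar T0 k.
Definition Sigma' : S -> Prop := fun s => I0 s \/ ar s <> n.

Definition index_set (I : S -> Prop) : Prop :=
  subset I I0 /\ infinite I /\ equipotent I I0 /\
  equipotent (fun k => I0 k /\ ~ I k) emptyN.

Definition L_I (I : S -> Prop) : S -> Prop := fun s => I s \/ ar s <> n.

Definition Ax_I (I : S -> Prop) : form S -> Prop :=
  fun p => (T0 p /\ sentence ar (L_I I) p) \/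
           (exists l, I0 l /\ ~ I l /\ p = allnotR ar l).

Definition T_I (I : S -> Prop) : form S -> Prop :=
  fun p => sentence ar Sigma' p /\ entails (Ax_I I) p.

Definition T_F (F : (S -> Prop) -> Prop) : (form S -> Prop) -> Prop :=
  fun T => exists I, F I /\ T = T_I I.
End Setting.

Section EClosure.
Variables (S : Type) (ar : S -> nat) (L : S -> Prop).

(** Σ' ∪ {E}: [None] is the new binary symbol E *)
Definition arE (o : option S) : nat :=
  match o with None => 2 | Some s => ar s end.
Definition LE (o : option S) : Prop :=
  match o with None => True | Some s => L s end.

(** E-combination of (A_j)_{j∈J}; the universes are made disjoint by
    tagging (disjoint union), J nonempty (witness j0). *)
Definition Ecomb (J : Type) (A : J -> structure S) (j0 : J)
  : structure (option S) :=
  @Structure (option S) {j : J & carrier (A j)}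
    (existT _ j0 (point (A j0)))
    (fun o xs => match o with
       | None => match xs with
                 | [a; b] => projT1 a = projT1 b
                 | _ => False end
       | Some R => exists j (ys : list (carrier (A j))),
                   xs = map (fun y => existT _ j y) ys /\ interp (A j) R ys
       end).

(** the E-class of a as an induced S-structure (needs E(a,a)) *)
Definition Eclass (M : structure (option S)) (a : carrier M)
  (h : interp M None [a; a]) : structure S :=
  @Structure S {b : carrier M | interp M None [a; b]}
    (exist _ a h)
    (fun R ys => interp M (Some R) (map (@proj1_sig _ _) ys)).

Definition ClE (TT : (form S -> Prop) -> Prop) : (form S -> Prop) -> Prop :=
  fun T => exists (M : structure (option S)) (J : Type)
                  (A : J -> structure S) (j0 : J),
    (forall j, TT (Th ar L (A j))) /\
    elem_equiv arE LE M (Ecomb A j0) /\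
    exists (a : carrier M) (h : interp M None [a; a]),
      T = Th ar L (@Eclass M a h).

Definition set_eq {T} (A B : T -> Prop) := forall x, A x <-> B x.

Definition generating (C G : (form S -> Prop) -> Prop) : Prop :=
  subset G C /\ set_eq (ClE G) C.

Definition least_generating (C G : (form S -> Prop) -> Prop) : Prop :=
  generating C G /\
  (forall G', subset G' G -> (exists T, G T /\ ~ G' T) -> ~ generating C G') /\
  (forall G', generating C G' -> subset G G').
End EClosure.

Definition bigcupF {S} (F' : (S -> Prop) -> Prop) : S -> Prop :=
  fun k => exists Y, F' Y /\ Y k.
Definition bigcapF {S} (F' : (S -> Prop) -> Prop) : S -> Prop :=
  fun k => forall Y, F' Y -> Y k.

Definition discrete {S} (F : (S -> Prop) -> Prop) : Prop :=
  forall F', subset F' F -> infinite F' ->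
  forall X, F X ->
    ~ ((X = bigcupF F' /\ ~ F' X) \/ (X = bigcapF F' /\ ~ F' X)).

(* Main.v *)
Require Import Defs.
From Stdlib Require Import List Arith Lia Classical FunctionalExtensionality PropExtensionality ProofIrrelevance Eqdep ClassicalEpsilon.
Import ListNotations.
Set Implicit Arguments.


Section Sem.
Variable Sym : Type.

Lemma upd_same (M : structure Sym) (e : nat -> carrier M) x : upd e x (e x) = e.
Proof. apply functional_extensionality; intro y; unfold upd.
  destruct (Nat.eqb_spec y x); subst; auto. Qed.

Lemma upd_eq {A} (e : nat -> A) x a : upd e x a x = a.
Proof. unfold upd; rewrite Nat.eqb_refl; auto. Qed.
Lemma upd_neq {A} (e : nat -> A) x a y : y <> x -> upd e x a y = e y.
Proof. intro H; unfold upd; destruct (Nat.eqb_spec y x); congruence. Qed.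

Lemma sat_ext (M : structure Sym) p : forall e e',
  (forall y, In y (fv p) -> e y = e' y) -> (sat M e p <-> sat M e' p).
Proof.
  induction p; simpl; intros e e' H.
  - rewrite (map_ext_in e e' l); [tauto | intros; apply H; auto].
  - rewrite (H n), (H n0) by auto; tauto.
  - tauto.
  - rewrite (IHp1 e e'), (IHp2 e e'); [tauto| |];
    intros; apply H; apply in_or_app; auto.
  - assert (Hu : forall a, forall y, In y (fv p) -> upd e n a y = upd e' n a y).
    { intros a y Hy; unfold upd; destruct (Nat.eqb_spec y n); auto;
      apply H; apply filter_In; split; auto;
      apply Bool.negb_true_iff, Nat.eqb_neq; auto. }
    split; intros Hs a; specialize (Hs a); specialize (IHp _ _ (Hu a)); tauto.
Qed.

Lemma sat_sent (M : structure Sym) p e e' : fv p = [] -> (sat M e p <-> sat M e' p).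
Proof. intro H; apply sat_ext; rewrite H; simpl; tauto. Qed.

Lemma holds_sat (M : structure Sym) p e : fv p = [] -> (holds M p <-> sat M e p).
Proof. intro H; split; [intro Hh; apply Hh| intros Hs e'; apply (sat_sent M p e e' H); auto]. Qed.

Lemma holds_or_not (M : structure Sym) p : fv p = [] -> holds M p \/ holds M (FNot p).
Proof. intro H. destruct (classic (sat M (fun _ => point M) p)) as [Hs|Hs].
  - left; apply (holds_sat M p (fun _ => point M) H); auto.
  - right; intros e Hs'; apply Hs; apply (sat_sent M p e _ H); auto. Qed.

Lemma sat_foldEx (M : structure Sym) body vs : forall e,
  sat M e (fold_right (fun x p => FEx x p) body vs) <->
  exists e', (forall y, ~ In y vs -> e' y = e y) /\ sat M e' body.
Proof.
  induction vs as [|x vs IH]; intro e; cbn [fold_right].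
  - split; [intro; exists e; auto|].
    intros [e' [H1 H2]]. replace e with e'; auto.
    apply functional_extensionality; intro y; apply H1; auto.
  - unfold FEx, FNot; simpl. split.
    + intro H. apply NNPP; intro Hn; apply H; intros a Ha.
      apply IH in Ha; destruct Ha as [e' [H1 H2]]; apply Hn; exists e'; split; auto.
      intros y Hy; rewrite H1 by (intro; apply Hy; simpl; auto); apply upd_neq; intro; subst; apply Hy; simpl; auto.
    + intros [e' [H1 H2]] Hall. apply (Hall (e' x)). apply IH. exists e'; split; auto.
      intros y Hy. destruct (Nat.eq_dec y x); subst.
      * rewrite upd_eq; auto.
      * rewrite upd_neq by auto; apply H1; simpl; intros [Hc|Hc]; [congruence|tauto].
Qed.

Lemma sat_foldAll (M : structure Sym) body vs : forall e,
  sat M e (fold_right (fun x p => FAll x p) body vs) <->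
  forall e', (forall y, ~ In y vs -> e' y = e y) -> sat M e' body.
Proof.
  induction vs as [|x vs IH]; intro e; cbn [fold_right].
  - split; [|intro H; apply H; auto].
    intros H e' H1. replace e' with e; auto.
    apply functional_extensionality; intro y; symmetry; apply H1; auto.
  - simpl. split.
    + intros H e' H1. specialize (H (e' x)). rewrite IH in H. apply H.
      intros y Hy. destruct (Nat.eq_dec y x); subst.
      * rewrite upd_eq; auto.
      * rewrite upd_neq by auto; apply H1; simpl; intros [Hc|Hc]; [congruence|tauto].
    + intros H a. apply IH. intros e' H1. apply H.
      intros y Hy. rewrite H1 by (intro; apply Hy; simpl; auto); apply upd_neq; intro; subst; apply Hy; simpl; auto.
Qed.

Lemma fv_foldEx body vs y : In y (fv (fold_right (fun x (p : form Sym) => FEx x p) body vs)) ->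
  In y (fv body) /\ ~ In y vs.
Proof.
  induction vs as [|x vs IH]; cbn [fold_right]; [simpl; tauto|].
  unfold FEx, FNot; simpl. rewrite !app_nil_r. intro H. apply filter_In in H.
  destruct H as [H1 H2]. apply IH in H1. apply Bool.negb_true_iff, Nat.eqb_neq in H2.
  split; [tauto|]. intros [|]; subst; tauto.
Qed.

Lemma fv_foldAll body vs y : In y (fv (fold_right (fun x (p : form Sym) => FAll x p) body vs)) ->
  In y (fv body) /\ ~ In y vs.
Proof.
  induction vs as [|x vs IH]; cbn [fold_right]; [simpl; tauto|].
  simpl. intro H. apply filter_In in H.
  destruct H as [H1 H2]. apply IH in H1. apply Bool.negb_true_iff, Nat.eqb_neq in H2.
  split; [tauto|]. intros [|]; subst; tauto.
Qed.

Lemma wf_foldEx ar L body vs : wf ar L body -> wf ar L (fold_right (fun x (p : form Sym) => FEx x p) body vs).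
Proof. induction vs; cbn [fold_right]; auto. unfold FEx, FNot; simpl; tauto. Qed.
Lemma wf_foldAll ar L body vs : wf ar L body -> wf ar L (fold_right (fun x (p : form Sym) => FAll x p) body vs).
Proof. induction vs; cbn [fold_right]; auto. Qed.

Lemma nil_of {A} (l : list A) : (forall y, ~ In y l) -> l = [].
Proof. destruct l; auto. intro H; exfalso; apply (H a); simpl; auto. Qed.

Fixpoint setl {A} (e : nat -> A) (s : nat) (xs : list A) : nat -> A :=
  match xs with [] => e | x :: xs => upd (setl e (S s) xs) s x end.

Lemma setl_map {A} (xs : list A) : forall (e : nat -> A) s, map (setl e s xs) (seq s (length xs)) = xs.
Proof.
  induction xs as [|x xs IH]; intros e s; simpl; auto.
  rewrite upd_eq; f_equal. transitivity (map (setl e (S s) xs) (seq (S s) (length xs))); [|apply IH].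
  apply map_ext_in; intros a Ha; apply in_seq in Ha; apply upd_neq; lia.
Qed.

Lemma setl_out {A} (xs : list A) : forall (e : nat -> A) s y, ~ In y (seq s (length xs)) -> setl e s xs y = e y.
Proof.
  induction xs as [|x xs IH]; intros e s y H; simpl; auto.
  simpl in H. rewrite upd_neq by (intro; apply H; auto). apply IH; intro; apply H; auto.
Qed.

Definition pos (ar : Sym -> nat) (M : structure Sym) k := exists xs, length xs = ar k /\ interp M k xs.

Lemma exR_sem ar (M : structure Sym) R : holds M (exR ar R) <-> pos ar M R.
Proof.
  unfold exR, pos. split.
  - intro H. specialize (H (fun _ => point M)). apply sat_foldEx in H.
    destruct H as [e' [_ H]]. exists (map e' (seq 0 (ar R))). rewrite length_map, length_seq; auto.
  - intros [xs [Hl Hi]] e. apply sat_foldEx. exists (setl e 0 xs). split.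
    + intros y Hy; apply setl_out; rewrite Hl; auto.
    + simpl. rewrite <- Hl, setl_map; auto.
Qed.

Lemma allnotR_sem ar (M : structure Sym) R : holds M (allnotR ar R) <-> ~ pos ar M R.
Proof.
  unfold allnotR, pos. split.
  - intros H [xs [Hl Hi]]. specialize (H (fun _ => point M)). rewrite sat_foldAll in H.
    specialize (H (setl (fun _ => point M) 0 xs)). simpl in H. rewrite <- Hl, setl_map in H.
    apply H; auto. intros y Hy; exact (setl_out xs (fun _ => point M) 0 y Hy).
  - intros H e. apply sat_foldAll. intros e' _. simpl. intro Hi. apply H.
    exists (map e' (seq 0 (ar R))). rewrite length_map, length_seq; auto.
Qed.

Lemma exR_sent ar (L : Sym -> Prop) R : L R -> sentence ar L (exR ar R).
Proof.
  intro H; split.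
  - apply wf_foldEx; simpl; rewrite length_seq; auto.
  - apply nil_of; intros y Hy; apply fv_foldEx in Hy; simpl in Hy; tauto.
Qed.

Lemma allnotR_sent ar (L : Sym -> Prop) R : L R -> sentence ar L (allnotR ar R).
Proof.
  intro H; split.
  - apply wf_foldAll; simpl; rewrite length_seq; auto.
  - apply nil_of; intros y Hy; apply fv_foldAll in Hy; simpl in Hy; rewrite app_nil_r in Hy; tauto.
Qed.

End Sem.

Section Syn.
Variable Sym : Type.

Fixpoint syms (p : form Sym) : list Sym :=
  match p with
  | FRel R _ => [R] | FEq _ _ => [] | FBot => []
  | FImp p q => syms p ++ syms q | FAll _ p => syms p end.

Lemma wf_mono ar (L L' : Sym -> Prop) p : (forall R, L R -> L' R) -> wf ar L p -> wf ar L' p.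
Proof. intro H; induction p; simpl; intuition. Qed.

Lemma wf_syms ar (L : Sym -> Prop) p : wf ar L p -> forall R, In R (syms p) -> L R.
Proof. induction p; simpl; intros Hw R0 Hin.
  all: try tauto.
  - destruct Hin as [<-|[]]; tauto.
  - apply in_app_or in Hin; destruct Hin; [apply (IHp1 (proj1 Hw))|apply (IHp2 (proj2 Hw))]; auto.
  - apply (IHp Hw); auto. Qed.

Lemma syms_wf ar (L L' : Sym -> Prop) p : wf ar L p -> (forall R, In R (syms p) -> L' R) -> wf ar L' p.
Proof. induction p; simpl; intros Hw H; try tauto.
  - split; [apply H; auto| tauto].
  - split; [apply IHp1|apply IHp2]; try tauto; intros; apply H; apply in_or_app; auto.
  all: try (apply IHp; auto). Qed.

Definition repl (L' : Sym -> Prop) : form Sym -> form Sym :=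
  fix r p := match p with
  | FRel R xs => if excluded_middle_informative (L' R) then FRel R xs else FBot
  | FEq x y => FEq x y | FBot => FBot
  | FImp p q => FImp (r p) (r q) | FAll x p => FAll x (r p) end.

Lemma repl_fv L' p y : In y (fv (repl L' p)) -> In y (fv p).
Proof. induction p; simpl; auto.
  - destruct (excluded_middle_informative (L' s)); simpl; tauto.
  - intro H; apply in_app_or in H; apply in_or_app; tauto.
  - rewrite !filter_In; tauto. Qed.

Lemma repl_sent ar (L L' : Sym -> Prop) p : sentence ar L p -> sentence ar (fun R => L R /\ L' R) (repl L' p).
Proof. intros [Hw Hf]; split.
  - clear Hf; induction p; simpl in *; auto; try tauto.
    destruct (excluded_middle_informative (L' s)); simpl; tauto.
  - apply nil_of; intros y Hy; apply repl_fv in Hy; rewrite Hf in Hy; auto. Qed.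

Lemma repl_sat ar (L L' : Sym -> Prop) (M : structure Sym) p :
  wf ar L p -> (forall R xs, L R -> ~ L' R -> length xs = ar R -> ~ interp M R xs) ->
  forall e, sat M e p <-> sat M e (repl L' p).
Proof. intros Hw H; induction p; simpl in *; intro e; try tauto.
  - destruct (excluded_middle_informative (L' s)); simpl; [tauto|].
    split; [|tauto]. intro Hi; apply (H s (map e l)); auto; try tauto. rewrite length_map; tauto.
  - rewrite IHp1, IHp2 by tauto; tauto.
  - split; intros Hs a; specialize (Hs a); rewrite IHp in *; auto. Qed.

Lemma sat_agree ar (L : Sym -> Prop) C pt (i1 i2 : Sym -> list C -> Prop) p :
  wf ar L p -> (forall R xs, L R -> length xs = ar R -> (i1 R xs <-> i2 R xs)) ->
  forall e, sat (Structure C pt i1) e p <-> sat (Structure C pt i2) e p.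
Proof. intros Hw H; induction p; simpl in *; intro e; try tauto.
  - apply H; try tauto; rewrite length_map; tauto.
  - rewrite IHp1, IHp2 by tauto; tauto.
  - split; intros Hs a; specialize (Hs a); rewrite IHp in *; auto. Qed.

Lemma sat_FNot (M : structure Sym) e p : sat M e (FNot p) <-> ~ sat M e p.
Proof. simpl; tauto. Qed.

End Syn.

Section Rel.
Variable Sym : Type.

Fixpoint rel (v : nat) (p : form Sym) : form (option Sym) :=
  match p with
  | FRel R xs => FRel (Some R) xs
  | FEq x y => FEq x y
  | FBot => FBot
  | FImp p q => FImp (rel v p) (rel v q)
  | FAll x p => FAll x (FImp (FRel None [v; x]) (rel v p))
  end.

Fixpoint allvars (p : form Sym) : list nat :=
  match p with FRel _ xs => xs | FEq x y => [x; y] | FBot => []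
  | FImp p q => allvars p ++ allvars q | FAll x p => x :: allvars p end.

Lemma fv_allvars p y : In y (fv p) -> In y (allvars p).
Proof. induction p; simpl; auto.
  - intro H; apply in_app_or in H; apply in_or_app; tauto.
  - rewrite filter_In; tauto. Qed.

Lemma relE (M : structure (option Sym)) (a : carrier M) (h : interp M None [a;a]) v p :
  ~ In v (allvars p) ->
  forall (ec : nat -> carrier (Eclass M a h)) (em : nat -> carrier M),
  em v = a -> (forall y, In y (fv p) -> em y = proj1_sig (ec y)) ->
  (sat (Eclass M a h) ec p <-> sat M em (rel v p)).
Proof.
  induction p; simpl; intros Hv ec em Hem Hc.
  - rewrite map_map. rewrite (map_ext_in em (fun x => proj1_sig (ec x)) l); [tauto|].
    intros; apply Hc; auto.
  - rewrite (Hc n), (Hc n0) by auto. split; [intros ->; auto|].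
    destruct (ec n) as [x1 p1], (ec n0) as [x2 p2]; simpl; intro; subst; f_equal; apply proof_irrelevance.
  - tauto.
  - rewrite (IHp1 ltac:(intro; apply Hv; apply in_or_app; auto) ec em Hem),
            (IHp2 ltac:(intro; apply Hv; apply in_or_app; auto) ec em Hem); [tauto| |];
      intros; apply Hc; apply in_or_app; auto.
  - assert (Hvn : v <> n) by (intro; apply Hv; auto).
    assert (Hv' : ~ In v (allvars p)) by (intro; apply Hv; auto).
    split.
    + intros H c Hc'. rewrite upd_eq, upd_neq in Hc' by auto. rewrite Hem in Hc'.
      apply (IHp Hv' (upd ec n (exist _ c Hc'))).
      * rewrite upd_neq; auto.
      * intros y Hy. destruct (Nat.eq_dec y n); subst.
        -- rewrite !upd_eq; auto.
        -- rewrite !upd_neq by auto. apply Hc. apply filter_In; split; auto.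
           apply Bool.negb_true_iff, Nat.eqb_neq; auto.
      * apply H.
    + intros H [c Hc']. specialize (H c). rewrite upd_eq, upd_neq in H by auto. rewrite Hem in H.
      specialize (H Hc').
      apply (IHp Hv' (upd ec n (exist _ c Hc')) (upd em n c)); auto.
      * rewrite upd_neq; auto.
      * intros y Hy. destruct (Nat.eq_dec y n); subst.
        -- rewrite !upd_eq; auto.
        -- rewrite !upd_neq by auto. apply Hc. apply filter_In; split; auto.
           apply Bool.negb_true_iff, Nat.eqb_neq; auto.
Qed.

Lemma map_existT_inj (J : Type) (P : J -> Type) (j : J) (l1 l2 : list (P j)) :
  map (existT P j) l1 = map (existT P j) l2 -> l1 = l2.
Proof. revert l2; induction l1; intros [|b l2]; simpl; intro H; try discriminate; auto.
  injection H; intros H1 H2. apply inj_pair2 in H2. f_equal; auto. Qed.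

Lemma relC ar (L : Sym -> Prop) (J : Type) (A : J -> structure Sym) (j0 j : J) v p :
  ~ In v (allvars p) -> wf ar L p ->
  (forall R, In R (syms p) -> ar R = 0 -> forall j1 j2, interp (A j1) R [] -> interp (A j2) R []) ->
  forall (ec : nat -> carrier (A j)) (em : nat -> carrier (Ecomb A j0)),
  projT1 (em v) = j -> (forall y, In y (fv p) -> em y = existT _ j (ec y)) ->
  (sat (A j) ec p <-> sat (Ecomb A j0) em (rel v p)).
Proof.
  induction p; simpl; intros Hv Hw H0 ec em Hem Hc.
  - rewrite (map_ext_in em (fun x => existT _ j (ec x)) l) by (intros; apply Hc; auto).
    split.
    + intro Hi. exists j, (map ec l). rewrite map_map; auto.
    + intros [j' [ys [Heq Hi]]]. destruct l as [|x l].
      * simpl in Heq. destruct ys; try discriminate. simpl.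
        apply (H0 s (or_introl eq_refl) ltac:(destruct Hw as [_ Hw]; simpl in Hw; auto) j' j); auto.
      * destruct ys as [|y ys]; try discriminate. simpl in Heq.
        injection Heq; intros _ Hh. assert (j = j') by (apply (f_equal (@projT1 _ _)) in Hh; auto).
        subst j'.
        assert (Heq' : map (existT (fun j => carrier (A j)) j) (ec x :: map ec l) =
                       map (existT (fun j => carrier (A j)) j) (y :: ys))
          by (simpl; rewrite map_map; exact Heq).
        pose proof (@map_existT_inj J (fun j => carrier (A j)) j (ec x :: map ec l) (y :: ys) Heq') as Heq''. clear Heq'. rename Heq'' into Heq'.
        simpl. rewrite Heq'. auto.
  - rewrite (Hc n), (Hc n0) by auto. split; [intros ->; auto|intro Hh; apply inj_pair2 in Hh; auto].
  - tauto.
  - assert (H1 : forall R, In R (syms p1) -> ar R = 0 -> forall j1 j2, interp (A j1) R [] -> interp (A j2) R [])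
      by (intros; eapply H0; eauto; apply in_or_app; auto).
    assert (H2 : forall R, In R (syms p2) -> ar R = 0 -> forall j1 j2, interp (A j1) R [] -> interp (A j2) R [])
      by (intros; eapply H0; eauto; apply in_or_app; auto).
    rewrite (IHp1 ltac:(intro; apply Hv; apply in_or_app; auto) (proj1 Hw) H1 ec em Hem),
            (IHp2 ltac:(intro; apply Hv; apply in_or_app; auto) (proj2 Hw) H2 ec em Hem); [tauto| |];
      intros; apply Hc; apply in_or_app; auto.
  - assert (Hvn : v <> n) by (intro; apply Hv; auto).
    assert (Hv' : ~ In v (allvars p)) by (intro; apply Hv; auto).
    split.
    + intros H b Hb. destruct b as [j' c]. unfold Ecomb in Hb; simpl in Hb.
      rewrite upd_eq, upd_neq in Hb by auto. simpl in Hb. rewrite Hem in Hb. subst j'.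
      apply (IHp Hv' Hw H0 (upd ec n c)).
      * rewrite upd_neq; auto.
      * intros y Hy. destruct (Nat.eq_dec y n); subst.
        -- rewrite !upd_eq; auto.
        -- rewrite !upd_neq by auto. apply Hc. apply filter_In; split; auto.
           apply Bool.negb_true_iff, Nat.eqb_neq; auto.
      * apply H.
    + intros H c. specialize (H (existT _ j c)).
      assert (Hb : interp (Ecomb A j0) None [upd em n (existT _ j c) v; upd em n (existT _ j c) n]).
      { unfold Ecomb; simpl. rewrite upd_eq, upd_neq by auto. simpl; auto. }
      specialize (H Hb).
      apply (IHp Hv' Hw H0 (upd ec n c) (upd em n (existT _ j c))); auto.
      * rewrite upd_neq; auto.
      * intros y Hy. destruct (Nat.eq_dec y n); subst.
        -- rewrite !upd_eq; auto.
        -- rewrite !upd_neq by auto. apply Hc. apply filter_In; split; auto.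
           apply Bool.negb_true_iff, Nat.eqb_neq; auto.
Qed.

Lemma wf_rel ar (L : Sym -> Prop) v p : wf ar L p -> wf (arE ar) (LE L) (rel v p).
Proof. induction p; simpl; tauto. Qed.

Lemma fv_rel v p y : In y (fv (rel v p)) -> y = v \/ In y (fv p).
Proof. induction p; cbn [rel fv]; auto.
  - intro H; apply in_app_or in H; destruct H as [H|H];
    [destruct (IHp1 H)|destruct (IHp2 H)]; auto; right; apply in_or_app; auto.
  - rewrite !filter_In. intros [H1 H2]. apply in_app_or in H1. destruct H1 as [H1|H1].
    + simpl in H1. destruct H1 as [<-|[<-|[]]]; auto.
      apply Bool.negb_true_iff, Nat.eqb_neq in H2; tauto.
    + destruct (IHp H1); auto.
Qed.

End Rel.

Definition FAnd {X} (p q : form X) : form X := FNot (FImp p (FNot q)).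
Definition FTrue {X} : form X := FNot FBot.
Definition conjl {X} (l : list (form X)) : form X := fold_right FAnd FTrue l.

Section Gen.
Variable X : Type.
Lemma sat_FAnd (M : structure X) e p q : sat M e (FAnd p q) <-> sat M e p /\ sat M e q.
Proof. unfold FAnd, FNot; simpl; tauto. Qed.
Lemma sat_FEx (M : structure X) e x p : sat M e (FEx x p) <-> exists c, sat M (upd e x c) p.
Proof. unfold FEx, FNot; simpl. split.
  - intro H; apply NNPP; intro Hn; apply H; intros c Hc; apply Hn; eauto.
  - intros [c Hc] H; apply (H c Hc). Qed.
Lemma sat_conjl (M : structure X) e l : sat M e (conjl l) <-> forall q, In q l -> sat M e q.
Proof. induction l; unfold conjl in *; cbn [fold_right] in *.
  - unfold FTrue, FNot; simpl. split; [intros _ _ []| intros _ H; exact H].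
  - rewrite sat_FAnd, IHl. split.
    + intros [H1 H2] q [<-|Hq]; auto.
    + intro H; split; [apply H; simpl; auto|intros q Hq; apply H; simpl; auto]. Qed.
Lemma wf_FAnd ar (L : X -> Prop) p q : wf ar L p -> wf ar L q -> wf ar L (FAnd p q).
Proof. unfold FAnd, FNot; simpl; tauto. Qed.
Lemma wf_FNot ar (L : X -> Prop) p : wf ar L p -> wf ar L (FNot p).
Proof. unfold FNot; simpl; tauto. Qed.
Lemma wf_FEx ar (L : X -> Prop) x p : wf ar L p -> wf ar L (FEx x p).
Proof. unfold FEx, FNot; simpl; tauto. Qed.
Lemma wf_conjl ar (L : X -> Prop) l : (forall q, In q l -> wf ar L q) -> wf ar L (conjl l).
Proof. induction l; unfold conjl in *; cbn [fold_right] in *; intro H.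
  - unfold FTrue, FNot; simpl; tauto.
  - apply wf_FAnd; simpl in H; auto. Qed.
Lemma fv_FAnd (p q : form X) y : In y (fv (FAnd p q)) -> In y (fv p) \/ In y (fv q).
Proof. unfold FAnd, FNot; simpl; rewrite !app_nil_r; intro H; apply in_app_or in H; auto. Qed.
Lemma fv_FNot (p : form X) y : In y (fv (FNot p)) -> In y (fv p).
Proof. unfold FNot; simpl; rewrite !app_nil_r; auto. Qed.
Lemma fv_FEx (p : form X) x y : In y (fv (FEx x p)) -> In y (fv p) /\ y <> x.
Proof. intro H. destruct (fv_foldEx p [x] y H) as [H1 H2]. split; auto.
  intro; subst; apply H2; simpl; auto. Qed.
Lemma fv_conjl (l : list (form X)) y : In y (fv (conjl l)) -> exists q, In q l /\ In y (fv q).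
Proof. induction l; unfold conjl in *; cbn [fold_right] in *.
  - unfold FTrue, FNot; simpl; tauto.
  - intro H; apply fv_FAnd in H; destruct H as [H|H]; [exists a; split; simpl; auto|].
    destruct (IHl H) as [q [? ?]]; exists q; split; simpl; auto. Qed.
End Gen.

Fixpoint maxl (l : list nat) : nat := match l with [] => 0 | x :: l => max x (maxl l) end.
Lemma maxl_ge l y : In y l -> y <= maxl l.
Proof. induction l; simpl; [tauto|]. intros [<-|H]; [lia|]. specialize (IHl H); lia. Qed.

Lemma lift_sig {A} (P : A -> Prop) (ys : list A) : (forall y, In y ys -> P y) ->
  exists zs : list (sig P), map (@proj1_sig _ _) zs = ys.
Proof. induction ys as [|y ys IH]; intro H.
  - exists []; auto.
  - destruct IH as [zs Hz]; [intros; apply H; simpl; auto|].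
    exists (exist _ y (H y (or_introl eq_refl)) :: zs); simpl; f_equal; auto. Qed.

Section Blk.
Variable Sym : Type.
Variable ar : Sym -> nat.

Definition Econj (v : nat) (ys : list nat) : form (option Sym) :=
  conjl (map (fun y => FRel None [v; y]) ys).
Definition block (v : nat) (k : Sym) : form (option Sym) :=
  fold_right (fun x p => FEx x p)
    (FAnd (Econj v (seq (S v) (ar k))) (FRel (Some k) (seq (S v) (ar k)))) (seq (S v) (ar k)).

Lemma block_sem (M : structure (option Sym)) e v k : sat M e (block v k) <->
  exists ys, length ys = ar k /\ (forall y, In y ys -> interp M None [e v; y]) /\ interp M (Some k) ys.
Proof.
  unfold block. rewrite sat_foldEx. split.
  - intros [e' [Hag Hs]]. rewrite sat_FAnd in Hs. destruct Hs as [H1 H2].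
    unfold Econj in H1; rewrite sat_conjl in H1.
    exists (map e' (seq (S v) (ar k))). split; [rewrite length_map, length_seq; auto|].
    split; [|exact H2].
    intros y Hy. apply in_map_iff in Hy. destruct Hy as [i [<- Hi]].
    specialize (H1 (FRel None [v; i]) (in_map _ _ _ Hi)). simpl in H1.
    rewrite <- (Hag v); auto. rewrite in_seq; lia.
  - intros [ys [Hl [HE Hi]]]. exists (setl e (S v) ys). split.
    + intros y Hy; apply setl_out; rewrite Hl; auto.
    + rewrite sat_FAnd; split.
      * unfold Econj; rewrite sat_conjl. intros q Hq. apply in_map_iff in Hq.
        destruct Hq as [i [<- Hi']]. simpl.
        rewrite (setl_out ys e (S v) v) by (rewrite in_seq; lia).
        apply HE. set (f := setl e (S v) ys).
        assert (Hm : map f (seq (S v) (length ys)) = ys) by apply setl_map.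
        rewrite <- Hm. apply in_map. rewrite Hl; auto.
      * simpl. rewrite <- Hl, setl_map. auto.
Qed.

Lemma wf_block (L : Sym -> Prop) v k : L k -> wf (arE ar) (LE L) (block v k).
Proof. intro H. unfold block. apply wf_foldEx. apply wf_FAnd.
  - apply wf_conjl. intros q Hq; apply in_map_iff in Hq; destruct Hq as [i [<- _]]; simpl; auto.
  - simpl; rewrite length_seq; auto. Qed.

Lemma fv_block v k y : In y (fv (block v k)) -> y = v.
Proof. unfold block. intro H. apply fv_foldEx in H. destruct H as [H1 H2].
  apply fv_FAnd in H1. destruct H1 as [H1|H1]; [|simpl in H1; tauto].
  apply fv_conjl in H1. destruct H1 as [q [Hq Hy]]. apply in_map_iff in Hq.
  destruct Hq as [i [<- Hi]]. simpl in Hy. destruct Hy as [<-|[<-|[]]]; auto; tauto. Qed.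

Lemma transfer (L : Sym -> Prop) (J : Type) (A : J -> structure Sym) (j0 : J)
  (M : structure (option Sym)) (a : carrier M) (h : interp M None [a;a])
  (P N : list Sym) (phi : form Sym) :
  elem_equiv (arE ar) (LE L) M (Ecomb A j0) ->
  (forall k, In k P -> L k /\ 1 <= ar k) -> (forall k, In k N -> L k) ->
  sentence ar L phi ->
  (forall R, In R (syms phi) -> ar R = 0 -> forall j1 j2, interp (A j1) R [] -> interp (A j2) R []) ->
  (forall k, In k P -> pos ar (Eclass M a h) k) ->
  (forall k, In k N -> ~ pos ar (Eclass M a h) k) ->
  holds (Eclass M a h) phi ->
  exists j, (forall k, In k P -> pos ar (A j) k) /\ (forall k, In k N -> ~ pos ar (A j) k) /\ holds (A j) phi.
Proof.
  intros Heq HP HN [Hw Hf] H0 HPp HNp Hphi.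
  set (v := S (maxl (allvars phi))).
  assert (Hv : ~ In v (allvars phi)) by (intro Hin; apply maxl_ge in Hin; unfold v in Hin; lia).
  set (body := FAnd (conjl (map (block v) P)) (FAnd (conjl (map (fun l => FNot (block v l)) N)) (rel v phi))).
  assert (Hs : sentence (arE ar) (LE L) (FEx v body)).
  { split.
    - apply wf_FEx. apply wf_FAnd; [|apply wf_FAnd].
      + apply wf_conjl; intros q Hq; apply in_map_iff in Hq; destruct Hq as [k [<- Hk]].
        apply wf_block; apply HP; auto.
      + apply wf_conjl; intros q Hq; apply in_map_iff in Hq; destruct Hq as [k [<- Hk]].
        apply wf_FNot; apply wf_block; apply HN; auto.
      + apply wf_rel; auto.
    - apply nil_of; intros y Hy. apply fv_FEx in Hy. destruct Hy as [Hy Hyv]. apply Hyv.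
      apply fv_FAnd in Hy. destruct Hy as [Hy|Hy]; [|apply fv_FAnd in Hy; destruct Hy as [Hy|Hy]].
      + apply fv_conjl in Hy; destruct Hy as [q [Hq Hy]]; apply in_map_iff in Hq;
        destruct Hq as [k [<- _]]; apply fv_block in Hy; auto.
      + apply fv_conjl in Hy; destruct Hy as [q [Hq Hy]]; apply in_map_iff in Hq;
        destruct Hq as [k [<- _]]; apply fv_FNot, fv_block in Hy; auto.
      + apply fv_rel in Hy; rewrite Hf in Hy; simpl in Hy; tauto. }
  assert (HM : holds M (FEx v body)).
  { intro e. apply sat_FEx. exists a. unfold body.
    rewrite sat_FAnd; split; [|rewrite sat_FAnd; split].
    - rewrite sat_conjl; intros q Hq; apply in_map_iff in Hq; destruct Hq as [k [<- Hk]].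
      apply block_sem. rewrite upd_eq. destruct (HPp k Hk) as [xs [Hl Hi]].
      exists (map (@proj1_sig _ _) xs). split; [rewrite length_map; auto|split].
      + intros y Hy; apply in_map_iff in Hy; destruct Hy as [[y' Hy'] [<- _]]; simpl; auto.
      + exact Hi.
    - rewrite sat_conjl; intros q Hq; apply in_map_iff in Hq; destruct Hq as [k [<- Hk]].
      rewrite sat_FNot, block_sem, upd_eq. intros [ys [Hl [HE Hi]]].
      destruct (lift_sig _ ys HE) as [zs Hz].
      apply (HNp k Hk). exists zs. split.
      + rewrite <- Hl, <- Hz, length_map; auto.
      + simpl. rewrite Hz; exact Hi.
    - apply (proj1 (@relE Sym M a h v phi Hv (fun _ => exist _ a h) (upd e v a) (upd_eq _ _ _)
        ltac:(intros y Hy; rewrite Hf in Hy; destruct Hy))).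
      apply Hphi. }
  apply (proj1 (Heq _ Hs)) in HM.
  specialize (HM (fun _ => existT _ j0 (point (A j0)))).
  apply sat_FEx in HM. destruct HM as [[j c] HM]. exists j. unfold body in HM.
  rewrite sat_FAnd in HM; destruct HM as [HM1 HM2]; rewrite sat_FAnd in HM2; destruct HM2 as [HM2 HM3].
  rewrite sat_conjl in HM1, HM2. split; [|split].
  - intros k Hk. specialize (HM1 _ (in_map _ _ _ Hk)). apply block_sem in HM1.
    rewrite upd_eq in HM1. destruct HM1 as [ys [Hl [HE Hi]]].
    unfold Ecomb in Hi; simpl in Hi. destruct Hi as [j' [ys' [Hys Hi]]].
    destruct ys' as [|y' ys''].
    + subst ys; simpl in Hl. specialize (HP k Hk); lia.
    + assert (j = j').
      { specialize (HE (existT _ j' y')). rewrite Hys in HE. specialize (HE (or_introl eq_refl)).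
        unfold Ecomb in HE; simpl in HE; auto. }
      subst j'. exists (y' :: ys''). split; auto. rewrite <- Hl, Hys, length_map; auto.
  - intros k Hk [ys' [Hl Hi]]. specialize (HM2 _ (in_map (fun l => FNot (block v l)) _ _ Hk)).
    rewrite sat_FNot, block_sem, upd_eq in HM2. apply HM2.
    exists (map (existT _ j) ys'). split; [rewrite length_map; auto|split].
    + intros y Hy; apply in_map_iff in Hy; destruct Hy as [y'' [<- _]]. unfold Ecomb; simpl; auto.
    + unfold Ecomb; simpl. exists j, ys'; auto.
  - apply (proj2 (@relC Sym ar L J A j0 j v phi Hv Hw H0 (fun _ => c) (upd (fun _ => existT _ j0 (point (A j0))) v (existT _ j c))
      ltac:(rewrite upd_eq; auto) ltac:(intros y Hy; rewrite Hf in Hy; destruct Hy))) in HM3.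
    apply (holds_sat (A j) phi (fun _ => c) Hf); auto.
Qed.

End Blk.

Lemma sat_eta {Sym} (M : structure Sym) p e :
  sat M e p <-> sat (Structure (carrier M) (point M) (interp M)) e p.
Proof. destruct M; simpl; tauto. Qed.

Lemma chain_ext {S} (G : (S -> Prop) -> Prop) (R : (S->Prop) -> (S->Prop) -> Prop) :
  (forall X, R X X) -> (forall X Y Z, R X Y -> R Y Z -> R X Z) ->
  (forall X Y, G X -> G Y -> R X Y \/ R Y X) ->
  forall l, (exists Y, In Y l /\ G Y) -> exists Ym, G Ym /\ forall Y, In Y l -> G Y -> R Y Ym.
Proof.
  intros Hr Ht Hc l; induction l as [|Y l IH]; intros [Y0 [HY0 HG0]]; [destruct HY0|].
  destruct (classic (exists Y', In Y' l /\ G Y')) as [Hex|Hnex].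
  - destruct (IH Hex) as [Ym [HGm Hm]].
    destruct (classic (G Y)) as [HGY|HGY].
    + destruct (Hc Y Ym HGY HGm) as [HR|HR].
      * exists Ym; split; auto. intros Z [<-|HZ] HGZ; auto.
      * exists Y; split; auto. intros Z [<-|HZ] HGZ; auto. eapply Ht; eauto.
    + exists Ym; split; auto. intros Z [<-|HZ] HGZ; auto. contradiction.
  - assert (HGY : G Y).
    { destruct HY0 as [<-|HY0]; auto. exfalso; apply Hnex; eauto. }
    exists Y; split; auto. intros Z [<-|HZ] HGZ; auto. exfalso; apply Hnex; eauto.
Qed.

Lemma comb {S} (I0s : S -> Prop) (F : (S -> Prop) -> Prop) (J : Type) (Q : J -> S -> Prop) (I : S -> Prop) :
  (forall K, F K -> subset K I0s) ->
  (forall I1 I2, F I1 -> F I2 -> subset I1 I2 \/ subset I2 I1) ->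
  discrete F -> F I -> (exists k, I k) ->
  (forall j, subset (Q j) I0s) ->
  (forall j k m, Q j k -> I0s m -> ~ Q j m -> exists K, F K /\ K k /\ ~ K m) ->
  (forall j m, Q j m -> exists K, F K /\ K m) ->
  (forall k l, I k -> I0s l -> ~ I l -> exists j, Q j k /\ ~ Q j l) ->
  (forall k, I k -> exists j, Q j k) ->
  exists j, forall k, Q j k <-> I k.
Proof.
  intros HF Hch Hdisc HI [k0 Hk0] HQ cl2 cl2' cl1 cl1'.
  apply NNPP; intro Hne.
  assert (Hne' : forall j, ~ (forall k, Q j k <-> I k)) by (intros j H; apply Hne; eauto).
  clear Hne.
  destruct (classic (forall k, I k -> exists j, Q j k /\ subset (Q j) I)) as [HB|HA].
  -
    set (F' := fun K => F K /\ subset K I /\ exists m, I m /\ ~ K m).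
    assert (Hcup : forall k, I k -> exists K, F' K /\ K k).
    { intros k Hk. destruct (HB k Hk) as [j [Hjk Hsub]].
      assert (Hm : exists m, I m /\ ~ Q j m).
      { apply NNPP; intro Hn. apply (Hne' j). intro m; split; [apply Hsub|].
        intro Hm; apply NNPP; intro Hq; apply Hn; eauto. }
      destruct Hm as [m [Hm Hqm]].
      destruct (cl2 j k m Hjk (HF I HI m Hm) Hqm) as [K [HK [Hkk Hkm]]].
      exists K; split; auto. unfold F'. split; auto. split; [|eauto].
      destruct (Hch K I HK HI) as [H|H]; auto. exfalso; apply Hkm; apply H; auto. }
    apply (Hdisc F') with (X := I); auto.
    + intros K [HK _]; auto.
    + intros [l Hl]. destruct (chain_ext F' (fun X Y => subset X Y)) with (l := l) as [Ym [HYm Hmax]].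
      * intros X x; auto.
      * intros X Y Z H1 H2 x Hx; auto.
      * intros X Y [HX _] [HY _]; apply Hch; auto.
      * destruct (Hcup k0 Hk0) as [K [HK _]]. exists K; split; auto.
      * destruct HYm as [_ [_ [m [Hm Hnm]]]]. apply Hnm.
        destruct (Hcup m Hm) as [K [HK HKm]]. apply (Hmax K); auto.
    + left. split.
      * apply functional_extensionality; intro k; apply propositional_extensionality; split.
        -- intro Hk; destruct (Hcup k Hk) as [K [HK HKk]]; exists K; auto.
        -- intros [K [[_ [HKI _]] HKk]]; auto.
      * intros [_ [_ [m [Hm Hnm]]]]; auto.
  -
    apply not_all_ex_not in HA. destruct HA as [k HA].
    apply imply_to_and in HA. destruct HA as [Hk HA].
    assert (HA' : forall j, Q j k -> exists m, Q j m /\ ~ I m).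
    { intros j Hj. apply NNPP; intro Hn. apply HA. exists j; split; auto.
      intros m Hm; apply NNPP; intro Hi; apply Hn; eauto. }
    clear HA.
    set (F'' := fun K => F K /\ subset I K /\ exists m, K m /\ ~ I m).
    assert (Hup : forall j m, Q j m -> ~ I m -> forall l, I0s l -> ~ Q j l -> exists K, F'' K /\ ~ K l).
    { intros j m Hjm Hm l Hl Hjl. destruct (cl2 j m l Hjm Hl Hjl) as [K [HK [HKm HKl]]].
      exists K; split; auto. split; auto. split; [|eauto].
      destruct (Hch K I HK HI) as [H|H]; auto. exfalso; apply Hm; apply H; auto. }
    assert (Hnon : exists K, F'' K).
    { destruct (cl1' k Hk) as [j Hj]. destruct (HA' j Hj) as [m [Hjm Hm]].
      destruct (cl2' j m Hjm) as [K [HK HKm]]. exists K. split; auto. split; [|eauto].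
      destruct (Hch K I HK HI) as [H|H]; auto. exfalso; apply Hm; apply H; auto. }
    apply (Hdisc F'') with (X := I); auto.
    + intros K [HK _]; auto.
    + intros [l Hl]. destruct (chain_ext F'' (fun X Y => subset Y X)) with (l := l) as [Ym [HYm Hmax]].
      * intros X x; auto.
      * intros X Y Z H1 H2 x Hx; auto.
      * intros X Y [HX _] [HY _]; destruct (Hch X Y HX HY); auto.
      * destruct Hnon as [K HK]. exists K; split; auto.
      * destruct HYm as [HFm [_ [m [Hm Hnm]]]]. apply Hnm.
        apply NNPP; intro Hnm'.
        destruct (cl1 k m Hk (HF _ HFm m Hm) Hnm') as [j [Hjk Hjm]].
        destruct (HA' j Hjk) as [m' [Hjm' Hm']].
        destruct (Hup j m' Hjm' Hm' m (HF _ HFm m Hm) Hjm) as [K [HK HKm]].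
        apply HKm. apply (Hmax K); auto.
    + right. split.
      * apply functional_extensionality; intro l; apply propositional_extensionality; split.
        -- intros Hl K [_ [HIK _]]; auto.
        -- intro Hl. apply NNPP; intro Hnl.
           destruct Hnon as [K0 HK0].
           assert (Hl0 : I0s l) by (apply (HF K0); [apply HK0|apply Hl; auto]).
           destruct (cl1 k l Hk Hl0 Hnl) as [j [Hjk Hjl]].
           destruct (HA' j Hjk) as [m [Hjm Hm]].
           destruct (Hup j m Hjm Hm l Hl0 Hjl) as [K [HK HKl]].
           apply HKl; apply Hl; auto.
      * intros [_ [_ [m [Hm Hnm]]]]; auto.
Qed.

Section Setting2.
Variables (S : Type) (ar : S -> nat) (T0 : form S -> Prop) (n : nat) (M0 : structure S).
Hypothesis HT0 : T0 = Th ar (fun _ => True) M0.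
Hypothesis Hn : 1 <= n.

Notation I0s := (I0 ar T0 n).
Notation Sig := (Sigma' ar T0 n).

Lemma M0_models : forall p, T0 p -> holds M0 p.
Proof. intros p Hp; rewrite HT0 in Hp; destruct Hp; auto. Qed.

Lemma T0_of p : sentence ar (fun _ => True) p -> holds M0 p -> T0 p.
Proof. intros; rewrite HT0; split; auto. Qed.

Lemma sent_True (L : S -> Prop) p : sentence ar L p -> sentence ar (fun _ => True) p.
Proof. intros [Hw Hf]; split; auto. eapply wf_mono; [|exact Hw]; auto. Qed.

Lemma T0_exR k : I0s k -> T0 (exR ar k).
Proof. intros [Har Hne]. apply T0_of; [apply exR_sent; auto|]. exact (Hne M0 M0_models). Qed.

Lemma TI_of K p : T0 p -> sentence ar (L_I ar n K) p -> sentence ar Sig p -> T_I ar T0 n K p.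
Proof. intros H1 H2 H3. split; auto. intros N HN; apply HN; left; auto. Qed.

Lemma holds_of_TI X K p : Th ar Sig X = T_I ar T0 n K -> T_I ar T0 n K p -> holds X p.
Proof. intros HX Hp; rewrite <- HX in Hp; destruct Hp; auto. Qed.

Lemma pos_TI X K : Th ar Sig X = T_I ar T0 n K -> forall k, I0s k -> (pos ar X k <-> K k).
Proof.
  intros HX k Hk. split.
  - intro Hp. apply NNPP; intro HK. apply (proj1 (allnotR_sem ar X k)); [|exact Hp].
    apply (holds_of_TI HX). split.
    + apply allnotR_sent. left; auto.
    + intros N HN. apply HN. right. exists k. auto.
  - intro HK. apply exR_sem. apply (holds_of_TI HX). split; [apply exR_sent; left; auto|].
    intros N HN; apply HN. left. split; [apply T0_exR; auto| apply exR_sent; left; auto].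
Qed.

Lemma Z X K : Th ar Sig X = T_I ar T0 n K -> forall R, ar R = 0 -> (interp X R [] <-> interp M0 R []).
Proof.
  intros HX R HR.
  assert (Hs : forall L : S -> Prop, (forall R, ar R <> n -> L R) -> sentence ar L (FRel R [])).
  { intros L HL; split; simpl; auto. split; auto. apply HL. lia. }
  assert (HsN : forall L : S -> Prop, (forall R, ar R <> n -> L R) -> sentence ar L (FNot (FRel R []))).
  { intros L HL; destruct (Hs L HL) as [Hw Hf]; split; simpl; auto. }
  destruct (classic (interp M0 R [])) as [H|H].
  - split; auto. intros _.
    assert (Hh : holds X (FRel R [])).
    { apply (holds_of_TI HX). apply TI_of.
      - apply T0_of; [apply Hs; auto|]. intro e; simpl; auto.
      - apply Hs; intros; right; auto.
      - apply Hs; intros; right; auto. }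
    apply (Hh (fun _ => point X)).
  - split; [|tauto]. intro Hx.
    assert (Hh : holds X (FNot (FRel R []))).
    { apply (holds_of_TI HX). apply TI_of.
      - apply T0_of; [apply HsN; auto|]. intro e; simpl; auto.
      - apply HsN; intros; right; auto.
      - apply HsN; intros; right; auto. }
    exfalso; apply (Hh (fun _ => point X)); simpl; auto.
Qed.

Lemma Ax_empty I N : models N (Ax_I ar T0 n I) ->
  forall R xs, Sig R -> ~ L_I ar n I R -> length xs = ar R -> ~ interp N R xs.
Proof.
  intros HN R xs HS HL Hl Hi.
  assert (HI0 : I0s R).
  { destruct HS as [HS|HS]; auto. exfalso; apply HL; right; auto. }
  assert (Hh : holds N (allnotR ar R)).
  { apply HN. right. exists R. split; auto. split; auto. intro; apply HL; left; auto. }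
  apply allnotR_sem in Hh. apply Hh. exists xs; auto.
Qed.

Lemma ThAx I X : models X (Ax_I ar T0 n I) -> Th ar Sig X = T_I ar T0 n I.
Proof.
  intro HX. apply functional_extensionality; intro p; apply propositional_extensionality; split.
  - intros [Hs Hh]. split; auto.
    set (q := repl (L_I ar n I) p).
    assert (Hq : sentence ar (L_I ar n I) q).
    { destruct (repl_sent (L_I ar n I) Hs) as [Hw Hf]. split; auto.
      eapply wf_mono; [|exact Hw]; simpl; tauto. }
    assert (Hrep : forall N, models N (Ax_I ar T0 n I) -> forall e, sat N e p <-> sat N e q).
    { intros N HN e. apply (repl_sat ar Sig (L_I ar n I) N p (proj1 Hs)). apply Ax_empty; auto. }
    destruct (holds_or_not M0 q (proj2 Hq)) as [HM|HM].
    + intros N HN e. apply (Hrep N HN). apply HN. left. split; auto.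
      apply T0_of; auto. apply (sent_True Hq).
    + exfalso.
      assert (Hn' : holds X (FNot q)).
      { apply HX. left. split.
        - apply T0_of; auto. apply (@sent_True (L_I ar n I)).
          destruct Hq as [Hw Hf]; split; simpl; auto. rewrite Hf; auto.
        - destruct Hq as [Hw Hf]; split; simpl; auto. rewrite Hf; auto. }
      apply (Hn' (fun _ => point X)). apply (Hrep X HX). apply Hh.
  - intros [Hs Hent]. split; auto.
Qed.

Definition AI (I : S -> Prop) : structure S :=
  Structure (carrier M0) (point M0) (fun R xs => ~ (I0s R /\ ~ I R) /\ interp M0 R xs).

Lemma AI_models I : models (AI I) (Ax_I ar T0 n I).
Proof.
  intros p [[HT Hs] | [l [Hl [HnI ->]]]].
  - intro e. apply M0_models in HT. specialize (HT e). rewrite sat_eta in HT.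
    unfold AI.
    assert (Hag : forall R xs, L_I ar n I R -> length xs = ar R ->
      (interp M0 R xs <-> ~ (I0s R /\ ~ I R) /\ interp M0 R xs)).
    { intros R xs HL Hlen. split; [|tauto]. intro Hi; split; auto.
      intros [[Har _] HnIR]. destruct HL as [HL|HL]; auto. }
    apply (proj1 (sat_agree ar (L_I ar n I) (point M0) (interp M0) _ p (proj1 Hs) Hag e)); auto.
  - apply allnotR_sem. intros [xs [_ [H _]]]. apply H; split; auto.
Qed.

Lemma Ax_wfTrue I p : Ax_I ar T0 n I p -> sentence ar (fun _ => True) p.
Proof. intros [[_ Hs]|[l [_ [_ ->]]]]; [apply (sent_True Hs)|apply allnotR_sent; auto]. Qed.

Lemma EE (A0 : structure S) p h : sentence ar (fun _ => True) p -> holds A0 p ->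
  holds (Eclass (Ecomb (fun _ : unit => A0) tt) (existT _ tt (point A0)) h) p.
Proof.
  intros [Hw Hf] Hh.
  set (v := Nat.succ (maxl (allvars p))).
  assert (Hv : ~ In v (allvars p)).
  { intro Hin; apply maxl_ge in Hin; unfold v in Hin. exact (Nat.nle_succ_diag_l _ Hin). }
  pose (E := Eclass (Ecomb (fun _ : unit => A0) tt) (existT _ tt (point A0)) h).
  pose (c0 := (exist _ (existT _ tt (point A0)) h : carrier E)).
  apply (proj2 (holds_sat E p (fun _ => c0) Hf)).
  apply (proj2 (@relE S _ _ h v p Hv (fun _ => c0)
            (fun _ => existT _ tt (point A0)) eq_refl ltac:(intros y Hy; rewrite Hf in Hy; destruct Hy))).
  apply (proj1 (@relC S ar (fun _ => True) unit (fun _ => A0) tt tt v p Hv Hw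
            ltac:(intros R _ _ [] []; auto) (fun _ => point A0) (fun _ => existT _ tt (point A0)) eq_refl
            ltac:(intros y Hy; rewrite Hf in Hy; destruct Hy))).
  apply Hh.
Qed.

Lemma posTh (L : S -> Prop) X Y k : Th ar L X = Th ar L Y -> L k -> (pos ar X k <-> pos ar Y k).
Proof.
  intros HXY Hk. pose proof (exR_sent ar L k Hk) as Hs.
  split; intro H; apply exR_sem; apply exR_sem in H.
  - assert (H0 : Th ar L X (exR ar k)) by (split; auto). rewrite HXY in H0; destruct H0; auto.
  - assert (H0 : Th ar L Y (exR ar k)) by (split; auto). rewrite <- HXY in H0; destruct H0; auto.
Qed.

Lemma sent_FTrue (L : S -> Prop) : sentence ar L FTrue.
Proof. split; simpl; auto. Qed.

Lemma CL F X : (forall K, F K -> subset K I0s) ->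
  ClE ar Sig (T_F ar T0 n F) (Th ar Sig X) ->
  forall P N, (forall k, In k P -> I0s k /\ pos ar X k) -> (forall k, In k N -> I0s k /\ ~ pos ar X k) ->
  exists K, F K /\ (forall k, In k P -> K k) /\ (forall k, In k N -> ~ K k).
Proof.
  intros HF [M [J [A0 [j0 [Hc [He [a [h HX]]]]]]]] P N HP HN.
  assert (Hpos : forall k, I0s k -> (pos ar X k <-> pos ar (Eclass M a h) k))
    by (intros k Hk; apply posTh with (L := Sig); auto; left; auto).
  destruct (transfer (ar:=ar) (L:=Sig) (A:=A0) (j0:=j0) (h:=h) P N (phi := FTrue) He) as [j [HPj [HNj _]]].
  - intros k Hk. destruct (HP k Hk) as [[Har _] _]. split; [left; split; auto; apply (HP k Hk)|lia].
  - intros k Hk. left. apply (HN k Hk).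
  - apply sent_FTrue.
  - intros R [].
  - intros k Hk. apply Hpos; apply HP; auto.
  - intros k Hk. rewrite <- Hpos by apply (HN k Hk). apply HN; auto.
  - intro e; simpl; auto.
  - destruct (Hc j) as [K [HFK HK]]. exists K; split; auto. split.
    + intros k Hk. apply (pos_TI HK); [apply HP; auto|]. auto.
    + intros k Hk HKk. apply (HNj k Hk). apply (pos_TI HK); [apply HN; auto|]. auto.
Qed.

Lemma TH F X I : (forall K, F K -> subset K I0s) -> subset I I0s ->
  ClE ar Sig (T_F ar T0 n F) (Th ar Sig X) ->
  (forall k, I0s k -> (pos ar X k <-> I k)) -> Th ar Sig X = T_I ar T0 n I.
Proof.
  intros HF HI [M [J [A0 [j0 [Hc [He [a [h HX]]]]]]]] Hpos. apply ThAx.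
  intros p [[HT Hs] | [l [Hl [HnI ->]]]].
  2: { apply allnotR_sem; rewrite Hpos; auto. }
  assert (HLS : forall R, L_I ar n I R -> Sig R).
  { intros R [HR|HR]; [left; apply HI; auto|right; auto]. }
  assert (HsS : sentence ar Sig p) by (destruct Hs as [Hw Hf]; split; auto; eapply wf_mono; [|exact Hw]; auto).
  assert (Hiff : holds X p <-> holds (Eclass M a h) p).
  { split; intro H.
    - assert (H0 : Th ar Sig X p) by (split; auto). rewrite HX in H0; destruct H0; auto.
    - assert (H0 : Th ar Sig (Eclass M a h) p) by (split; auto). rewrite <- HX in H0; destruct H0; auto. }
  apply Hiff. apply NNPP; intro Hnh.
  assert (HnE : holds (Eclass M a h) (FNot p)).
  { destruct (holds_or_not (Eclass M a h) p (proj2 Hs)); tauto. }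
  set (P := filter (fun R => Nat.eqb (ar R) n) (syms p)).
  assert (HPI : forall k, In k P -> I k /\ ar k = n).
  { intros k Hk. apply filter_In in Hk. destruct Hk as [Hk Har]. apply Nat.eqb_eq in Har.
    pose proof (wf_syms ar (L_I ar n I) p (proj1 Hs) k Hk) as HL. destruct HL as [HL|HL]; tauto. }
  assert (HM0 : forall j, forall R, ar R = 0 -> (interp (A0 j) R [] <-> interp M0 R [])).
  { intros j R HR. destruct (Hc j) as [K [_ HK]]. apply (Z HK HR). }
  destruct (transfer (ar:=ar) (L:=Sig) (A:=A0) (j0:=j0) (h:=h) P [] (phi := FNot p) He) as [j [HPj [_ Hj]]].
  - intros k Hk. destruct (HPI k Hk) as [HIk Har]. split; [left; apply HI; auto|lia].
  - intros k [].
  - destruct HsS as [Hw Hf]; split; simpl; auto. rewrite Hf; auto.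
  - intros R _ HR j1 j2 H1. apply HM0; auto. apply (HM0 j1); auto.
  - intros k Hk. destruct (HPI k Hk) as [HIk Har]. apply posTh with (L := Sig) (X := X); auto.
    + left; apply HI; auto.
    + apply Hpos; auto.
  - intros k [].
  - exact HnE.
  - destruct (Hc j) as [K [HFK HK]].
    assert (HTK : T_I ar T0 n K p).
    { apply TI_of; auto. destruct Hs as [Hw Hf]; split; auto.
      apply (syms_wf ar (L_I ar n I) (L_I ar n K) p Hw). intros R HR. destruct (Nat.eq_dec (ar R) n) as [Har|Har]; [|right; auto].
      left. assert (HRP : In R P) by (apply filter_In; split; auto; apply Nat.eqb_eq; auto).
      destruct (HPI R HRP) as [HIR _].
      apply (pos_TI HK); [apply HI; auto|]. apply HPj; auto. }
    apply (Hj (fun _ => point (A0 j))). apply (holds_of_TI HK HTK).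
Qed.

End Setting2.
Unset Implicit Arguments.

Theorem proposition4p8 (S : Type) (ar : S -> nat) (T0 : form S -> Prop)
  (n : nat) :
  complete_theory ar (fun _ => True) T0 ->
  LU ar T0 ->
  1 <= n ->
  infinite (I0 ar T0 n) ->
  forall F : (S -> Prop) -> Prop,
    (forall I, F I -> index_set ar T0 n I) ->
    infinite F ->
    (forall I1 I2, F I1 -> F I2 -> subset I1 I2 \/ subset I2 I1) ->
    (forall I1 I2, F I1 -> F I2 -> subset I1 I2 ->
       (exists k, I2 k /\ ~ I1 k) -> infinite (fun k => I2 k /\ ~ I1 k)) ->
    discrete F ->
    least_generating ar (Sigma' ar T0 n)
      (ClE ar (Sigma' ar T0 n) (T_F ar T0 n F)) (T_F ar T0 n F).
Proof.
  intros [M0 HT0] HLU Hn HI0inf F HFidx HFinf Hchain Hdiff Hdisc.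
  assert (HF : forall K, F K -> subset K (I0 ar T0 n)) by (intros K HK; apply (HFidx K HK)).
  assert (HinC : forall I, F I -> ClE ar (Sigma' ar T0 n) (T_F ar T0 n F) (T_I ar T0 n I)).
  { intros I HI.
    pose (A1 := AI ar T0 n M0 I).
    assert (HA1 : Th ar (Sigma' ar T0 n) A1 = T_I ar T0 n I)
      by (apply (ThAx HT0); intros p Hp; apply (AI_models HT0 Hp)).
    assert (hh : interp (Ecomb (fun _ : unit => A1) tt) None
                   [existT _ tt (point A1); existT _ tt (point A1)]) by (simpl; reflexivity).
    exists (Ecomb (fun _ : unit => A1) tt), unit, (fun _ => A1), tt.
    split; [intros _; exists I; split; auto|split].
    - intros p _; tauto.
    - exists (existT _ tt (point A1)), hh. symmetry. apply (ThAx HT0).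
      intros p Hp. apply (EE (ar:=ar)); [apply (Ax_wfTrue Hp)|]. apply (AI_models HT0 Hp). }
  assert (Hthird : forall G', generating ar (Sigma' ar T0 n) (ClE ar (Sigma' ar T0 n) (T_F ar T0 n F)) G' ->
                   subset (T_F ar T0 n F) G').
  { intros G' [Hsub Heq] T [I [HI ->]].
    destruct (HFidx I HI) as [HI0 [HIinf _]].
    assert (HC : ClE ar (Sigma' ar T0 n) G' (T_I ar T0 n I)) by (apply (proj2 (Heq _)); apply HinC; auto).
    destruct HC as [M [J [A0 [j0 [Hc [He [a [h HX]]]]]]]].
    assert (HposE : forall k, I0 ar T0 n k -> (pos ar (Eclass M a h) k <-> I k))
      by (apply (pos_TI HT0 (eq_sym HX))).
    assert (Hcl : forall j, ClE ar (Sigma' ar T0 n) (T_F ar T0 n F) (Th ar (Sigma' ar T0 n) (A0 j)))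
      by (intro j; apply Hsub; apply Hc).
    set (Q := fun j k => I0 ar T0 n k /\ pos ar (A0 j) k).
    assert (HFT : sentence ar (Sigma' ar T0 n) FTrue) by (split; [unfold FTrue, FNot; simpl; auto|reflexivity]).
    assert (HtrueE : holds (Eclass M a h) FTrue) by (intro e; unfold FTrue, FNot; simpl; auto).
    assert (cl1 : forall k l, I k -> I0 ar T0 n l -> ~ I l -> exists j, Q j k /\ ~ Q j l).
    { intros k l Hk Hl Hnl.
      destruct (transfer (ar:=ar) (L:=Sigma' ar T0 n) (A:=A0) (j0:=j0) (h:=h) [k] [l] (phi:=FTrue) He)
        as [j [H1 [H2 _]]].
      - intros k' [<-|[]]. destruct (HI0 k Hk) as [Har _]. split; [left; apply HI0; auto|lia].
      - intros l' [<-|[]]. left; auto.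
      - exact HFT.
      - intros R [].
      - intros k' [<-|[]]. apply HposE; auto.
      - intros l' [<-|[]]. rewrite HposE; auto.
      - exact HtrueE.
      - exists j. split; [split; [apply HI0; auto| apply H1; simpl; auto]|].
        intros [_ Hp]; apply (H2 l); simpl; auto. }
    assert (cl1' : forall k, I k -> exists j, Q j k).
    { intros k Hk.
      destruct (transfer (ar:=ar) (L:=Sigma' ar T0 n) (A:=A0) (j0:=j0) (h:=h) [k] [] (phi:=FTrue) He)
        as [j [H1 _]].
      - intros k' [<-|[]]. destruct (HI0 k Hk) as [Har _]. split; [left; apply HI0; auto|lia].
      - intros l' [].
      - exact HFT.
      - intros R [].
      - intros k' [<-|[]]. apply HposE; auto.
      - intros l' [].
      - exact HtrueE.
      - exists j. split; [apply HI0; auto| apply H1; simpl; auto]. }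
    assert (cl2 : forall j k m, Q j k -> I0 ar T0 n m -> ~ Q j m -> exists K, F K /\ K k /\ ~ K m).
    { intros j k m [Hk Hpk] Hm Hnm.
      destruct (CL HT0 Hn HF (Hcl j) [k] [m]) as [K [HK [H1 H2]]].
      - intros k' [<-|[]]; auto.
      - intros m' [<-|[]]; split; auto. intro Hp; apply Hnm; split; auto.
      - exists K; split; auto. split; [apply H1; simpl; auto| apply H2; simpl; auto]. }
    assert (cl2' : forall j m, Q j m -> exists K, F K /\ K m).
    { intros j m [Hm Hpm].
      destruct (CL HT0 Hn HF (Hcl j) [m] []) as [K [HK [H1 _]]].
      - intros k' [<-|[]]; auto.
      - intros m' [].
      - exists K; split; auto. apply H1; simpl; auto. }
    assert (HQ : forall j, subset (Q j) (I0 ar T0 n)) by (intros j k [Hk _]; auto).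
    assert (Hne : exists k, I k).
    { apply NNPP; intro Hn'. apply HIinf. exists []. intros x Hx; apply Hn'; eauto. }
    destruct (comb Q I HF Hchain Hdisc HI Hne HQ cl2 cl2' cl1 cl1') as [j Hj].
    assert (HT : Th ar (Sigma' ar T0 n) (A0 j) = T_I ar T0 n I).
    { apply (TH HT0 Hn HF HI0 (Hcl j)). intros k Hk. rewrite <- (Hj k). unfold Q; tauto. }
    rewrite <- HT; apply Hc. }
  split; [split|split].
  - intros T [I [HI ->]]; apply HinC; auto.
  - intro T; tauto.
  - intros G' Hs [T [HT HnT]] Hgen. apply HnT. apply (Hthird G' Hgen); auto.
  - exact Hthird.
Qed.
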